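(* Let $t\in[0,1]$. For each $n$ let $\boldsymbol{g}\in\mathbb{R}^n$ be a deterministic vector with $\|\boldsymbol{g}\|_2^2=O(n^{(1-t)/(1+t)})$, and let $b=b_n$ satisfy $b=\Omega(n^{-t/(1+t)})$. Let $\boldsymbol{w}=(w_1,\ldots,w_n)^\top$ have i.i.d. entries from $\mathbb{P}_w\in\mathcal{D}_1\cup\mathcal{D}_2$ (not depending on $n$). Then for any fixed $\delta>0$, $$\lim_{n\to\infty}\mathbb{P}\Bigl(\frac{|\boldsymbol{w}^\top\boldsymbol{g}|}{b\|\boldsymbol{w}\|_2^2}>\delta\Bigr)=0.$$
   Context: For $s>0$, $\mathcal{D}_s$ is the class of distributions of $\xi$ with $\mathbb{E}[\xi]=0$ and $1\le\mathbb{E}[|\xi|^s]\le2$. $a_n=O(c_n)$ means $|a_n|\le C|c_n|$ for a constant $C$; $b=\Omega(c_n)$ means $|c_n|\le C|b|$ for a constant $C>0$. Convention: $a/0=\infty$. *)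

(* Defs.v *)
From HB Require Import structures.
From mathcomp Require Import all_boot all_order all_algebra.
From mathcomp Require Import all_classical all_reals all_analysis.
Set Implicit Arguments. Unset Strict Implicit. Unset Printing Implicit Defensive.
Import Order.TTheory GRing.Theory Num.Theory.
Local Open Scope ring_scope.
Local Open Scope classical_set_scope.

(* Mutual independence of the finite family (X i)_{i<n} of real random
   variables: product rule for preimages of arbitrary Borel sets
   (taking B i = setT recovers every subfamily). *)
Definition mutually_independent (d : measure_display) (T : measurableType d)
  (R : realType) (P : probability T R) (n : nat) (X : 'I_n -> T -> R) : Prop :=
  forall B : 'I_n -> set R, (forall i, measurable (B i)) ->
    P (\bigcap_(i in [set: 'I_n]) (X i @^-1` B i)) =
    (\prod_(i < n) P (X i @^-1` B i))%E.

Definition in_D1 (R : realType) (mu : probability R R) : Prop :=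
  mu.-integrable setT (fun x : R => x%:E) /\
  (\int[mu]_x x%:E = 0)%E /\
  (1 <= \int[mu]_x (`|x|)%:E <= 2)%E.

Definition in_D2 (R : realType) (mu : probability R R) : Prop :=
  mu.-integrable setT (fun x : R => x%:E) /\
  (\int[mu]_x x%:E = 0)%E /\
  (1 <= \int[mu]_x (`|x| ^+ 2)%:E <= 2)%E.

(* The event { num / den > delta } with the convention a/0 = +oo. *)
Definition ratio_gt (R : realType) (delta num den : R) : bool :=
  if den == 0 then true else delta < num / den.

(* Main.v *)
Require Import Defs.
From HB Require Import structures.
From mathcomp Require Import all_boot all_order all_algebra.
From mathcomp Require Import all_classical all_reals all_analysis.
From mathcomp Require Import measurable_realfun.
From mathcomp Require Import lra ring.
Import Order.TTheory GRing.Theory Num.Theory.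
Set Implicit Arguments. Unset Strict Implicit. Unset Printing Implicit Defensive.
Local Open Scope ring_scope.
Local Open Scope classical_set_scope.

Definition Ex d (T : measurableType d) (R : realType) (P : probability T R)
  (f : T -> R) : R := fine (\int[P]_x (f x)%:E).

Lemma mpre d (T : measurableType d) (R : realType) (f : T -> R) (B : set R) :
  measurable_fun setT f -> measurable B -> measurable (f @^-1` B).
Proof. by move=> mf mB; rewrite -[_ @^-1` _]setTI; exact: mf. Qed.

Lemma mEFin d (T : measurableType d) (R : realType) (f : T -> R) :
  measurable_fun setT f -> measurable_fun setT (fun x => (f x)%:E).
Proof. by move=> mf; exact: (proj2 (measurable_EFinP _ _) mf). Qed.

Lemma Ex_int d (T : measurableType d) (R : realType) (P : probability T R)
  (f : T -> R) : P.-integrable setT (EFin \o f) ->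
  (\int[P]_x (f x)%:E = (Ex P f)%:E)%E.
Proof. by move=> h; rewrite /Ex fineK //; exact: integrable_fin_num h. Qed.

Lemma int_indic d (T : measurableType d) (R : realType) (P : probability T R)
  (A : set T) : measurable A -> P.-integrable setT (EFin \o \1_A).
Proof. by move=> mA; exact: integrable_indic. Qed.

Lemma int_Z d (T : measurableType d) (R : realType) (P : probability T R)
  (c : R) (f : T -> R) : P.-integrable setT (EFin \o f) ->
  P.-integrable setT (EFin \o (fun x => c * f x)).
Proof.
move=> h; have := integrableZl measurableT c h.
by apply: eq_integrable => // x _ /=; rewrite EFinM.
Qed.

Lemma int_sum d (T : measurableType d) (R : realType) (P : probability T R)
  (I : Type) (s : seq I) (f : I -> T -> R) :
  (forall k, P.-integrable setT (EFin \o f k)) ->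
  P.-integrable setT (EFin \o (fun x => \sum_(k <- s) f k x)).
Proof.
move=> h; have := @integrable_sum _ _ _ P setT measurableT I s xpredT
  (fun k x => (f k x)%:E) (fun k _ => h k).
apply: eq_integrable => // x _ /=; by rewrite sumEFin.
Qed.

Lemma Ex_sum d (T : measurableType d) (R : realType) (P : probability T R)
  (I : Type) (s : seq I) (f : I -> T -> R) :
  (forall k, P.-integrable setT (EFin \o f k)) ->
  Ex P (fun x => \sum_(k <- s) f k x) = \sum_(k <- s) Ex P (f k).
Proof.
move=> h; rewrite /Ex.
under eq_integral do rewrite -sumEFin.
rewrite (@integral_sum _ _ _ P setT measurableT I (fun k x => (f k x)%:E)) //.
rewrite (eq_bigr (fun k => (Ex P (f k))%:E)); first by rewrite sumEFin.
by move=> k _; rewrite Ex_int.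
Qed.

Lemma ExZ d (T : measurableType d) (R : realType) (P : probability T R)
  (c : R) (f : T -> R) : P.-integrable setT (EFin \o f) ->
  Ex P (fun x => c * f x) = c * Ex P f.
Proof.
move=> h; rewrite /Ex.
under eq_integral do rewrite EFinM.
by rewrite (integralZl measurableT h) Ex_int.
Qed.

Lemma Ex_indic d (T : measurableType d) (R : realType) (P : probability T R)
  (A : set T) : measurable A -> Ex P (\1_A) = fine (P A).
Proof. by move=> mA; rewrite /Ex integral_indic // setIT. Qed.

Lemma int_lin d (T : measurableType d) (R : realType) (P : probability T R)
  (I : Type) (s : seq I) (c : I -> R) (A : I -> set T) :
  (forall k, measurable (A k)) ->
  P.-integrable setT (EFin \o (fun x => \sum_(k <- s) c k * \1_(A k) x)).
Proof. by move=> mA; apply: int_sum => k; apply: int_Z; exact: int_indic. Qed.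

Lemma Ex_lin d (T : measurableType d) (R : realType) (P : probability T R)
  (I : Type) (s : seq I) (c : I -> R) (A : I -> set T) :
  (forall k, measurable (A k)) ->
  Ex P (fun x => \sum_(k <- s) c k * \1_(A k) x) =
  \sum_(k <- s) c k * fine (P (A k)).
Proof.
move=> mA; rewrite Ex_sum; last by move=> k; apply: int_Z; exact: int_indic.
by apply: eq_bigr => k _; rewrite ExZ ?Ex_indic //; exact: int_indic.
Qed.

Lemma markov' d (T : measurableType d) (R : realType) (P : probability T R)
  (f : T -> R) (eps : R) : measurable_fun setT f -> (forall x, 0 <= f x) ->
  0 < eps -> (eps%:E * P [set x | (eps <= f x)%R] <= \int[P]_x (f x)%:E)%E.
Proof.
move=> mf f0 e0.
have mA : measurable [set x | eps <= f x].
  by have := measurable_fun_le measurableT (measurable_cst eps) mf; rewrite setTI.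
set A := [set x | (eps <= f x)%R] in mA *.
have e1 : (\int[P]_x (eps * \1_A x)%:E = eps%:E * P A)%E.
  rewrite Ex_int; last exact: int_Z (int_indic _ mA).
  rewrite ExZ ?Ex_indic //; last exact: int_indic.
  by rewrite EFinM fineK //; exact: fin_num_measure.
rewrite -e1.
apply: ge0_le_integral => //.
- by move=> x _; rewrite lee_fin; apply: mulr_ge0; [exact: ltW | rewrite indicE].
- apply: (@mEFin _ _ _ (fun x => eps * \1_A x)).
  apply: measurable_funM => //; exact/measurable_indic.
- exact: mEFin.
move=> x _; rewrite lee_fin indicE.
by case: (boolP (x \in A)) => [/set_mem h|_]; [rewrite mulr1 | rewrite mulr0].
Qed.

Lemma transfer d (T : measurableType d) (R : realType) (P : probability T R)
  (mu : probability R R) (W : T -> R) (h : R -> R) :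
  measurable_fun setT W -> (forall B, measurable B -> P (W @^-1` B) = mu B) ->
  measurable_fun setT h -> (forall y, 0 <= h y) ->
  (\int[P]_x (h (W x))%:E = \int[mu]_y (h y)%:E)%E.
Proof.
move=> mW law mh h0.
have := @ge0_integral_pushforward _ _ _ _ _ W mW P setT (fun y => (h y)%:E)
  measurableT (mEFin mh) (fun y _ => (h0 y : (0 <= (h y)%:E)%E)).
rewrite preimage_setT => <-.
apply: eq_measure_integral => A mA _.
exact: (law A mA).
Qed.

Lemma pair_indep d (T : measurableType d) (R : realType) (P : probability T R)
  n (X : 'I_n -> T -> R) : mutually_independent P X ->
  forall i j, i != j -> forall A B, measurable A -> measurable B ->
  P (X i @^-1` A `&` X j @^-1` B) = (P (X i @^-1` A) * P (X j @^-1` B))%E.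
Proof.
move=> hX i j ij A B mA mB.
pose C k := if k == i then A else if k == j then B else setT.
have mC k : measurable (C k) by rewrite /C; case: ifP => // _; case: ifP.
have := hX C mC.
have -> : \bigcap_(k in [set: 'I_n]) (X k @^-1` C k) = X i @^-1` A `&` X j @^-1` B.
  apply/seteqP; split => x.
    move=> h; split.
      by have := h i I; rewrite /C eqxx.
    by have := h j I; rewrite /C eqxx eq_sym (negbTE ij).
  move=> [xA xB] k _; rewrite /C.
  case: (eqVneq k i) => [->//|_]; case: (eqVneq k j) => [->//|_] //.
move=> ->.
rewrite (bigD1 i) //= (bigD1 j) //=; last by rewrite eq_sym.
rewrite big1 ?mule1.
  by rewrite /C eqxx eq_sym (negbTE ij) eqxx.
move=> k /andP[ki kj]; rewrite /C (negbTE ki) (negbTE kj) preimage_setT.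
exact: probability_setT.
Qed.

Lemma rep (R : realType) (s : R -> R) (rs : seq R) (phi : R -> R) (y : R) :
  uniq rs -> s y \in rs ->
  phi (s y) = \sum_(r <- rs) phi r * \1_(s @^-1` [set r]) y.
Proof.
move=> urs sy; rewrite (bigD1_seq (s y)) //= indicE mem_set // mulr1.
rewrite big1 ?addr0 // => r rs'; rewrite indicE memNset ?mulr0 //.
by move=> /= e; move: rs'; rewrite e eqxx.
Qed.

Definition msum (R : realType) (mu : probability R R) (s : R -> R) (rs : seq R) :=
  \sum_(r <- rs) r * fine (mu (s @^-1` [set r])).

Lemma Ex_cst1 d (T : measurableType d) (R : realType) (P : probability T R) :
  Ex P (cst 1) = 1.
Proof.
have E1 : (\int[P]_y (cst (1:R) y)%:E = \int[P]_y (cst 1%E y))%E by [].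
rewrite /Ex E1 integral_cst //.
rewrite (_ : (_ * _)%E = 1%:E) //.
by rewrite mul1e; exact: probability_setT.
Qed.

Lemma sum_pr1 (R : realType) (mu : probability R R) (s : R -> R) (rs : seq R) :
  measurable_fun setT s -> uniq rs -> (forall y, s y \in rs) ->
  \sum_(r <- rs) fine (mu (s @^-1` [set r])) = 1.
Proof.
move=> ms urs srs.
have mS r : measurable (s @^-1` [set r]) := mpre ms (measurable_set1 r).
have := Ex_lin mu rs (fun _ => 1) mS.
rewrite (_ : (fun y => \sum_(r <- rs) 1 * \1_(s @^-1` [set r]) y) = cst 1); last first.
  by apply/funext => y; rewrite -(@rep R s rs (fun _ => 1) y urs (srs y)).
rewrite Ex_cst1 => ->.
by apply: eq_bigr => r _; rewrite mul1r.
Qed.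

Lemma second_moment d (T : measurableType d) (R : realType) (P : probability T R)
  n (W : 'I_n -> T -> R) (mu : probability R R) (s : R -> R) (rs : seq R)
  (a : 'I_n -> R) :
  (forall i, measurable_fun setT (W i)) ->
  (forall i B, measurable B -> P (W i @^-1` B) = mu B) ->
  mutually_independent P W ->
  measurable_fun setT s -> uniq rs -> (forall y, s y \in rs) ->
  (\int[P]_x ((\sum_(i < n) a i * (s (W i x) - msum mu s rs)) ^+ 2)%:E =
  ((\sum_(i < n) a i ^+ 2) *
    \sum_(r <- rs) (r - msum mu s rs) ^+ 2 * fine (mu (s @^-1` [set r])))%:E)%E.
Proof.
move=> mW law indep ms urs srs.
set m := msum mu s rs.
pose pr r := fine (mu (s @^-1` [set r])).
pose B i r := W i @^-1` (s @^-1` [set r]).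
have mS r : measurable (s @^-1` [set r]) := mpre ms (measurable_set1 r).
have mB i r : measurable (B i r) := mpre (mW i) (mS r).
have PB i r : fine (P (B i r)) = pr r by rewrite /B law.
have sum1 : \sum_(r <- rs) pr r = 1 := sum_pr1 mu ms urs srs.
have sumd : \sum_(r <- rs) (r - m) * pr r = 0.
  under eq_bigr do rewrite mulrBl.
  by rewrite sumrB -mulr_sumr sum1 mulr1 subrr.
pose U i x := s (W i x) - m.
have Urep i x : U i x = \sum_(r <- rs) (r - m) * \1_(B i r) x.
  exact: (@rep R s rs (fun r => r - m) (W i x) urs (srs _)).
have U2rep i x : U i x * U i x = \sum_(r <- rs) (r - m) ^+ 2 * \1_(B i r) x.
  rewrite -expr2.
  exact: (@rep R s rs (fun r => (r - m) ^+ 2) (W i x) urs (srs _)).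
have UUrep i j x : U i x * U j x = \sum_(r <- rs) \sum_(r' <- rs)
    ((r - m) * (r' - m)) * \1_(B i r `&` B j r') x.
  rewrite !Urep mulr_suml; apply: eq_bigr => r _; rewrite mulr_sumr.
  by apply: eq_bigr => r' _; rewrite indicI /= mulrACA.
have intUU i j : P.-integrable setT (EFin \o (fun x => U i x * U j x)).
  apply: (eq_integrable _ (EFin \o (fun x => \sum_(r <- rs) \sum_(r' <- rs)
    ((r - m) * (r' - m)) * \1_(B i r `&` B j r') x))) => //.
    by move=> x _ /=; rewrite UUrep.
  apply: int_sum => r; apply: int_lin => r'.
  exact: measurableI.
pose V := \sum_(r <- rs) (r - m) ^+ 2 * pr r.
have EUU i j : Ex P (fun x => U i x * U j x) = if i == j then V else 0.
  case: eqVneq => [<-|ij].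
    rewrite (funext (U2rep i)) Ex_lin //.
    by apply: eq_bigr => r _; rewrite PB.
  rewrite (funext (UUrep i j)) Ex_sum; last first.
    by move=> r; apply: int_lin => r'; exact: measurableI.
  rewrite (eq_bigr (fun r => \sum_(r' <- rs) ((r - m) * (r' - m)) *
      fine (P (B i r `&` B j r')))); last first.
    by move=> r _; rewrite Ex_lin // => r'; exact: measurableI.
  rewrite -[RHS](mul0r (\sum_(r <- rs) (r - m) * pr r)) -[X in X * _]sumd.
  rewrite mulr_suml; apply: eq_bigr => r _; rewrite mulr_sumr.
  apply: eq_bigr => r' _.
  rewrite /B pair_indep // fineM; last 2 first.
  - by rewrite law //; exact: fin_num_measure.
  - by rewrite law //; exact: fin_num_measure.
  rewrite !law //. rewrite -/(pr r) -/(pr r').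
  by rewrite mulrACA.
have Qrep x : (\sum_(i < n) a i * (s (W i x) - m)) ^+ 2 =
    \sum_(i < n) \sum_(j < n) (a i * a j) * (U i x * U j x).
  rewrite expr2 mulr_suml; apply: eq_bigr => i _; rewrite mulr_sumr.
  by apply: eq_bigr => j _; rewrite mulrACA.
under eq_integral => x _ do rewrite Qrep.
rewrite Ex_int; last first.
  by apply: int_sum => i; apply: int_sum => j; apply: int_Z.
congr (_%:E).
rewrite Ex_sum; last first.
  by move=> i; apply: int_sum => j; apply: int_Z.
rewrite mulr_suml; apply: eq_bigr => i _.
rewrite Ex_sum; last by move=> j; apply: int_Z.
rewrite (bigD1 i) //= big1 ?addr0.
  by rewrite ExZ // EUU eqxx expr2.
by move=> j ji; rewrite ExZ // EUU eq_sym (negbTE ji) mulr0.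
Qed.

Lemma int_cstP d (T : measurableType d) (R : realType) (P : probability T R) (c : R) :
  (\int[P]_x (cst c%:E x) = c%:E)%E.
Proof.
rewrite integral_cst // -[RHS]mule1; congr (_ * _)%E; exact: probability_setT.
Qed.

Lemma mnorm d (T : measurableType d) (R : realType) (f : T -> R) :
  measurable_fun setT f -> measurable_fun setT (fun x => `|f x|).
Proof. by move=> mf; have := measurableT_comp (@normr_measurable R setT) mf. Qed.

Lemma mabsdiff (R : realType) (s : R -> R) : measurable_fun setT s ->
  measurable_fun setT (fun x : R => `|x - s x|).
Proof.
move=> ms.
have := measurableT_comp (@normr_measurable R setT)
  (measurable_funB (@measurable_id _ R setT) ms).
exact.
Qed.

Lemma l1_bound d (T : measurableType d) (R : realType) (P : probability T R)
  n (W : 'I_n -> T -> R) (mu : probability R R) (s : R -> R) (m e : R)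
  (a : 'I_n -> R) :
  (forall i, measurable_fun setT (W i)) ->
  (forall i B, measurable B -> P (W i @^-1` B) = mu B) ->
  measurable_fun setT s ->
  (\int[mu]_y (`|y - s y|)%:E <= e%:E)%E ->
  (\int[P]_x (`|\sum_(i < n) a i * (W i x - s (W i x) + m)|)%:E <=
    ((\sum_(i < n) `|a i|) * (e + `|m|))%:E)%E.
Proof.
move=> mW law ms he.
pose h y := `|y - s y| + `|m|.
have mh : measurable_fun setT h.
  by apply: measurable_funD => //; exact: mabsdiff.
have h0 y : 0 <= h y by rewrite addr_ge0.
have mhW i : measurable_fun setT (fun x => h (W i x)).
  exact: (measurableT_comp mh (mW i)).
have H1 : (\int[P]_x (`|\sum_(i < n) a i * (W i x - s (W i x) + m)|)%:E <=
    \int[P]_x (\sum_(i < n) `|a i| * h (W i x))%:E)%E.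
  apply: ge0_le_integral => //.
  - apply: mEFin; apply: mnorm.
    apply: measurable_sum => i; apply: measurable_funM => //.
    apply: measurable_funD => //; apply: measurable_funB => //.
    exact: (measurableT_comp ms (mW i)).
  - apply: (@mEFin _ _ _ (fun x => \sum_(i < n) `|a i| * h (W i x))).
    by apply: measurable_sum => i; apply: measurable_funM.
  - move=> x _; rewrite lee_fin; apply: (le_trans (ler_norm_sum _ _ _)).
    apply: ler_sum => i _; rewrite normrM; apply: ler_wpM2l => //.
    exact: ler_normD.
apply: (le_trans H1).
under eq_integral do rewrite -sumEFin.
rewrite ge0_integral_sum //; last 2 first.
- by move=> i; apply: mEFin; apply: measurable_funM.
- by move=> i x _; rewrite lee_fin mulr_ge0.
rewrite mulr_suml -sumEFin; apply: lee_sum => i _.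
under eq_integral do rewrite EFinM.
rewrite ge0_integralZl //; last 2 first.
- exact: mEFin.
- by move=> x _; rewrite lee_fin.
rewrite EFinM; apply: lee_wpmul2l => //.
rewrite (transfer (h := h) (mW i) (law i)) //.
rewrite /h; under eq_integral do rewrite EFinD.
rewrite ge0_integralD //; last exact: (mEFin (mabsdiff ms)).
by rewrite int_cstP EFinD; apply: leeD.
Qed.

Lemma m_bound (R : realType) (mu : probability R R) (s : R -> R) (rs : seq R) :
  measurable_fun setT s -> uniq rs -> (forall y, s y \in rs) ->
  mu.-integrable setT (fun y => y%:E) -> (\int[mu]_y y%:E = 0)%E ->
  ((`|msum mu s rs|)%:E <= \int[mu]_y (`|y - s y|)%:E)%E.
Proof.
move=> ms urs srs iid h0.
have mS r : measurable (s @^-1` [set r]) := mpre ms (measurable_set1 r).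
have sE : s = (fun y => \sum_(r <- rs) r * \1_(s @^-1` [set r]) y).
  by apply/funext => y; exact: (@rep R s rs id y urs (srs y)).
have int_s : mu.-integrable setT (EFin \o s) by rewrite sE; exact: int_lin.
have Es : msum mu s rs = Ex mu s by rewrite [in RHS]sE Ex_lin.
have h1 : ((msum mu s rs)%:E = \int[mu]_y ((s y)%:E - y%:E))%E.
  by rewrite integralB_EFin // h0 sube0 Ex_int // Es.
rewrite (_ : (`|msum mu s rs|)%:E = `|(msum mu s rs)%:E|%E) // h1.
apply: (le_trans (le_abse_integral _ _ _)) => //.
  apply: emeasurable_funB; first exact: mEFin.
  exact: (@mEFin _ _ _ id).
apply: ge0_le_integral => //.
- apply: measurableT_comp => //; apply: emeasurable_funB; first exact: mEFin.
  exact: (@mEFin _ _ _ id).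
- exact: (mEFin (mabsdiff ms)).
- by move=> y _; rewrite -EFinB /= distrC.
Qed.

Lemma nondeg (R : realType) (mu : probability R R) :
  in_D1 mu \/ in_D2 mu -> 0 < fine (mu [set y | 2^-1 <= `|y|]).
Proof.
move=> hD.
set A := [set y : R | 2^-1 <= `|y|].
have mA : measurable A.
  have := measurable_fun_le measurableT (measurable_cst (2^-1 : R))
    (@normr_measurable R setT).
  by rewrite setTI.
have fA : mu A \is a fin_num by exact: fin_num_measure.
rewrite lt_neqAle fine_ge0 ?measure_ge0 // andbT; apply/negP => /eqP h.
have muA : mu A = 0%E by rewrite -(fineK fA) -h.
have ae : {ae mu, forall y : R, setT y -> `|y| <= 2^-1}.
  exists A; split => // y /= hy; rewrite /A /=.
  by apply: ltW; rewrite ltNge; apply/negP => hle; apply: hy => _.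
case: hD => [[_ [_ /andP[h1 _]]] | [_ [_ /andP[h1 _]]]].
- have : (\int[mu]_x (`|x|)%:E <= \int[mu]_x (cst (2^-1 : R)%:E x))%E.
    apply: ae_ge0_le_integral => //.
    + exact: (mEFin (mnorm (@measurable_id _ R setT))).
    + by move=> x _; rewrite lee_fin.
  rewrite int_cstP => h2.
  have := le_trans h1 h2; rewrite lee_fin; lra.
- have : (\int[mu]_x (`|x| ^+ 2)%:E <= \int[mu]_x (cst (2^-1 ^+ 2 : R)%:E x))%E.
    apply: ae_ge0_le_integral => //.
    + apply: (@mEFin _ _ _ (fun x : R => `|x| ^+ 2)); apply: measurable_funX.
      exact: (mnorm (@measurable_id _ R setT)).
    + by move=> x _; rewrite lee_fin.
    + apply: filterS ae => y hy Ty; rewrite lee_fin.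
      by rewrite lerXn2r // ?nnegrE //; exact: hy.
  rewrite int_cstP => h2.
  have := le_trans h1 h2; rewrite lee_fin; lra.
Qed.

Lemma mle d (T : measurableType d) (R : realType) (f g : T -> R) :
  measurable_fun setT f -> measurable_fun setT g ->
  measurable [set x | f x <= g x].
Proof. by move=> mf mg; have := measurable_fun_le measurableT mf mg; rewrite setTI. Qed.

Lemma mlt d (T : measurableType d) (R : realType) (f g : T -> R) :
  measurable_fun setT f -> measurable_fun setT g ->
  measurable [set x | f x < g x].
Proof.
move=> mf mg; rewrite (_ : [set x | f x < g x] = ~` [set x | g x <= f x]).
  exact/measurableC/mle.
by apply/seteqP; split => x /=; rewrite ltNge => /negP.
Qed.

Lemma markov_bound d (T : measurableType d) (R : realType) (P : probability T R)
  (f : T -> R) (eps B : R) : measurable_fun setT f -> (forall x, 0 <= f x) ->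
  0 < eps -> (\int[P]_x (f x)%:E <= B%:E)%E ->
  (P [set x | (eps <= f x)%R] <= (B / eps)%:E)%E.
Proof.
move=> mf f0 e0 hB.
have := le_trans (markov' P mf f0 e0) hB.
have mS : measurable [set x | eps <= f x] by apply: mle => //; exact: measurable_cst.
have fin : P [set x | eps <= f x] \is a fin_num by apply: fin_num_measure.
rewrite -(fineK fin) -EFinM !lee_fin => h.
by rewrite mulrC ler_pdivlMl.
Qed.

Definition Vof (R : realType) (mu : probability R R) (s : R -> R) (rs : seq R) :=
  \sum_(r <- rs) (r - msum mu s rs) ^+ 2 * fine (mu (s @^-1` [set r])).

Lemma Vof_ge0 (R : realType) (mu : probability R R) (s : R -> R) (rs : seq R) :
  0 <= Vof mu s rs.
Proof.
by apply: sumr_ge0 => r _; rewrite mulr_ge0 ?sqr_ge0 // fine_ge0 // measure_ge0.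
Qed.

Lemma msum_indic (R : realType) (mu : probability R R) (A : set R) :
  msum mu (\1_A) [:: 0; 1] = fine (mu A).
Proof.
rewrite /msum !big_cons big_nil mul0r add0r addr0 mul1r.
congr (fine (mu _)); apply/seteqP; split => y /=; rewrite indicE.
  by case: (boolP (y \in A)) => [/set_mem //|_] /= /esym/eqP; rewrite oner_eq0.
by move=> yA; rewrite mem_set.
Qed.

Lemma indic_range (R : realType) (A : set R) (y : R) : (\1_A y : R) \in [:: 0; 1].
Proof. by rewrite indicE !inE; case: (y \in A); rewrite ?eqxx ?orbT. Qed.

Lemma fixed_n d (T : measurableType d) (R : realType) (P : probability T R)
  (mu : probability R R) n (W : 'I_n -> T -> R) (gv : 'I_n -> R) (bb delta K : R)
  (s : R -> R) (rs : seq R) (e : R) :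
  (0 < n)%N ->
  (forall i, measurable_fun setT (W i)) ->
  (forall i B, measurable B -> P (W i @^-1` B) = mu B) ->
  mutually_independent P W ->
  bb != 0 -> \sum_(i < n) (gv i / `|bb|) ^+ 2 <= K * n%:R -> 0 <= K ->
  0 < delta ->
  measurable_fun setT s -> uniq rs -> (forall y, s y \in rs) ->
  (\int[mu]_y (`|y - s y|)%:E <= e%:E)%E -> `|msum mu s rs| <= e ->
  0 < fine (mu [set y : R | 2^-1 <= `|y|]) ->
  (P [set x | (ratio_gt delta `|\sum_(i < n) W i x * gv i|
      (bb * \sum_(i < n) W i x ^+ 2))%R] <=
    (n%:R * Vof mu (\1_[set y : R | 2^-1 <= `|y|]) [:: 0; 1] /
        (fine (mu [set y : R | 2^-1 <= `|y|]) * n%:R / 2) ^+ 2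
     + (K * n%:R) * Vof mu s rs /
        (delta * (fine (mu [set y : R | 2^-1 <= `|y|]) / 8) * n%:R / 2) ^+ 2
     + ((1 + K) * n%:R / 2 * (2 * e)) /
        (delta * (fine (mu [set y : R | 2^-1 <= `|y|]) / 8) * n%:R / 2))%:E)%E.
Proof.
move=> n0 mW law indep bb0 hK K0 d0 ms urs srs he hm p0.
set A0 := [set y : R | 2^-1 <= `|y|].
set p := fine (mu A0).
set c := p / 8.
set m := msum mu s rs.
set VA := Vof mu (\1_A0) [:: 0; 1].
set Vs := Vof mu s rs.
pose a i := gv i / `|bb|.
have mA0 : measurable A0.
  have := measurable_fun_le measurableT (measurable_cst (2^-1 : R))
    (@normr_measurable R setT).
  by rewrite setTI.
have nR : 0 < n%:R :> R by rewrite ltr0n.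
have c0 : 0 < c by rewrite /c divr_gt0.
have e0 : 0 <= e by exact: le_trans hm.
pose mA := msum mu (\1_A0) [:: 0; 1].
pose QA x := \sum_(i < n) 1 * (\1_A0 (W i x) - mA).
pose Qa x := \sum_(i < n) a i * (s (W i x) - m).
pose Qb x := \sum_(i < n) a i * (W i x - s (W i x) + m).
have mIA i : measurable_fun setT (fun x => \1_A0 (W i x) : R).
  by have := measurableT_comp (measurable_indic (R := R) (D := setT) mA0) (mW i).
have msW i : measurable_fun setT (fun x => s (W i x)).
  by have := measurableT_comp ms (mW i).
have mQA : measurable_fun setT QA.
  apply: measurable_sum => i; apply: measurable_funM => //.
  by apply: measurable_funB => //.
have mQa : measurable_fun setT Qa.
  apply: measurable_sum => i; apply: measurable_funM => //.
  by apply: measurable_funB => //.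
have mQb : measurable_fun setT Qb.
  apply: measurable_sum => i; apply: measurable_funM => //.
  by apply: measurable_funD => //; apply: measurable_funB.
pose F1 := [set x | (p * n%:R / 2) ^+ 2 <= QA x ^+ 2].
pose F2a := [set x | (delta * c * n%:R / 2) ^+ 2 <= Qa x ^+ 2].
pose F2b := [set x | delta * c * n%:R / 2 <= `|Qb x|].
have mF1 : measurable F1 by apply: mle => //; exact: measurable_funX.
have mF2a : measurable F2a by apply: mle => //; exact: measurable_funX.
have mF2b : measurable F2b by apply: mle => //; exact: mnorm.
pose num x := `|\sum_(i < n) W i x * gv i|.
pose den x := bb * \sum_(i < n) W i x ^+ 2.
have mnum : measurable_fun setT num.
  by apply: mnorm; apply: measurable_sum => i; apply: measurable_funM.
have mden : measurable_fun setT den.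
  by apply: measurable_funM => //; apply: measurable_sum => i; exact: measurable_funX.
set E := [set x | ratio_gt _ _ _].
have mE : measurable E.
  have -> : E = den @^-1` [set 0] `|`
      ([set x | 0 < den x] `&` [set x | delta * den x < num x]) `|`
      ([set x | den x < 0] `&` [set x | num x < delta * den x]).
    apply/seteqP; split => x; rewrite /E /ratio_gt /=.
      case: (eqVneq (den x) 0) => [-> _|dn]; first by left; left.
      case: (ltgtP (den x) 0) => [dlt|dgt|/eqP]; last by rewrite (negbTE dn).
        by rewrite ltr_ndivlMr // mulrC => h; right.
      by rewrite ltr_pdivlMr // mulrC => h; left; right.
    case: (eqVneq (den x) 0) => [//|dn].
    move=> [[/= h|[/= dgt h]]|[/= dlt h]]; first by rewrite h eqxx in dn.
      by rewrite ltr_pdivlMr // mulrC.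
    by rewrite ltr_ndivlMr // mulrC.
  apply: measurableU; first apply: measurableU.
  - exact: mpre mden (measurable_set1 _).
  - by apply: measurableI; apply: mlt => //; apply: measurable_funM.
  - by apply: measurableI; apply: mlt => //; apply: measurable_funM.
have mAp : mA = p by rewrite /mA msum_indic.
have sub : E `<=` F1 `|` (F2a `|` F2b).
  move=> x; rewrite /E /= /ratio_gt => hx.
  have S0 : 0 <= \sum_(i < n) W i x ^+ 2.
    by apply: sumr_ge0 => i _; exact: sqr_ge0.
  case: (lerP (\sum_(i < n) W i x ^+ 2) (c * n%:R)) => hS.
  - left; rewrite /F1 /=.
    have hI : \sum_(i < n) \1_A0 (W i x) <= 4 * \sum_(i < n) W i x ^+ 2.
      rewrite mulr_sumr; apply: ler_sum => i _; rewrite indicE.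
      case: (boolP (W i x \in A0)) => [/set_mem /= h|_] /=; last first.
        by rewrite mulr_ge0 ?sqr_ge0.
      rewrite -real_normK ?num_real //.
      suff : 1 <= 4 * `|W i x| ^+ 2 by [].
      have : 0 <= `|W i x| by [].
      move: h => /= h.
      have h2 : 1 <= 2 * `|W i x|.
        by rewrite -(ler_pM2l (x := 2^-1)) ?invr_gt0 // mulr1 mulrA mulVf ?mul1r.
      nra.
    have QAe : QA x = \sum_(i < n) \1_A0 (W i x) - n%:R * p.
      rewrite /QA mAp; under eq_bigr do rewrite mul1r.
      by rewrite sumrB sumr_const card_ord mulr_natl.
    rewrite QAe.
    move: hI hS; rewrite /c => hI hS.
    have p00 : 0 < p by [].
    have : \sum_(i < n) \1_A0 (W i x) - n%:R * p <= - (p * n%:R / 2) by lra.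
    have : 0 <= p * n%:R / 2 by rewrite divr_ge0 // mulr_ge0 // ltW.
    nra.
  - right.
    have Spos : 0 < \sum_(i < n) W i x ^+ 2.
      by apply: lt_trans hS; rewrite mulr_gt0.
    have dn : den x != 0 by rewrite mulf_neq0 // gt_eqF.
    move: hx; rewrite /den in dn; rewrite (negbTE dn) => hx.
    have bpos : 0 < bb.
      case: (ltrP 0 bb) => // hb.
      have hbn : bb < 0 by rewrite lt_neqAle bb0 hb.
      have : `|\sum_(i < n) W i x * gv i| / (bb * \sum_(i < n) W i x ^+ 2) <= 0.
        by rewrite mulr_ge0_le0 // invr_le0 nmulr_rle0 // ltW.
      by move=> h; move: (lt_le_trans hx h); rewrite ltNge (ltW d0).
    move: hx; rewrite ltr_pdivlMr ?mulr_gt0 // => hx.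
    have hQ : Qa x + Qb x = (\sum_(i < n) W i x * gv i) / bb.
      rewrite /Qa /Qb -big_split /= mulr_suml; apply: eq_bigr => i _.
      rewrite -mulrDr /a gtr0_norm //.
      rewrite (_ : s (W i x) - m + (W i x - s (W i x) + m) = W i x); last by ring.
      by rewrite mulrC mulrA.
    have hN : delta * c * n%:R < `|Qa x| + `|Qb x|.
      apply: lt_le_trans (ler_normD _ _).
      rewrite hQ normrM normfV (gtr0_norm bpos) ltr_pdivlMr //.
      apply: le_lt_trans hx.
      have := ltW hS; have dbb : 0 < delta * bb by rewrite mulr_gt0.
      nra.
    case: (lerP (delta * c * n%:R / 2) `|Qb x|) => hb; first by right.
    left; rewrite /F2a /= -(real_normK (num_real (Qa x))).
    have t0 : 0 <= delta * c * n%:R / 2.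
      by rewrite divr_ge0 // mulr_ge0 // mulr_ge0 // ltW.
    have ht : delta * c * n%:R / 2 < `|Qa x| by lra.
    move: t0 ht; set t := delta * c * n%:R / 2 => t0 ht.
    nra.
have mU : measurable (F1 `|` (F2a `|` F2b)).
  by apply: measurableU => //; exact: measurableU.
have PE : (P E <= P F1 + (P F2a + P F2b))%E.
  have h := le_measure P (mem_set mE) (mem_set mU) sub.
  have h' := measureU2 P mF1 (measurableU _ _ mF2a mF2b).
  have h'' := measureU2 P mF2a mF2b.
  apply: (le_trans h); apply: (le_trans h'); exact: leeD.
have u01 : uniq [:: 0; 1 : R] by rewrite /= inE eq_sym oner_eq0.
have h1 : (P F1 <= (n%:R * VA / (p * n%:R / 2) ^+ 2)%:E)%E.
  apply: (markov_bound (f := fun x => QA x ^+ 2)).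
  - exact: measurable_funX.
  - by move=> x; exact: sqr_ge0.
  - by rewrite exprn_gt0 // divr_gt0 // mulr_gt0.
  rewrite /QA /mA (second_moment (fun _ => 1) mW law indep
    (measurable_indic (R := R) (D := setT) mA0) u01 (indic_range A0)).
  rewrite lee_fin /VA /Vof; apply: ler_wpM2r.
    by apply: sumr_ge0 => r _; rewrite mulr_ge0 ?sqr_ge0 // fine_ge0 // measure_ge0.
  under eq_bigr do rewrite expr1n.
  by rewrite sumr_const card_ord.
have h2 : (P F2a <= ((K * n%:R) * Vs / (delta * c * n%:R / 2) ^+ 2)%:E)%E.
  apply: (markov_bound (f := fun x => Qa x ^+ 2)).
  - exact: measurable_funX.
  - by move=> x; exact: sqr_ge0.
  - by rewrite exprn_gt0 // divr_gt0 // mulr_gt0 // mulr_gt0.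
  rewrite /Qa /m (second_moment a mW law indep ms urs srs).
  rewrite lee_fin /Vs /Vof; apply: ler_wpM2r => //.
  by apply: sumr_ge0 => r _; rewrite mulr_ge0 ?sqr_ge0 // fine_ge0 // measure_ge0.
have h3 : (P F2b <= (((1 + K) * n%:R / 2 * (2 * e)) / (delta * c * n%:R / 2))%:E)%E.
  apply: (markov_bound (f := fun x => `|Qb x|)).
  - exact: mnorm.
  - by [].
  - by rewrite divr_gt0 // mulr_gt0 // mulr_gt0.
  apply: (le_trans (l1_bound m a mW law ms he)).
  rewrite lee_fin; apply: ler_pM.
  - by apply: sumr_ge0.
  - by rewrite addr_ge0.
  - have hs : \sum_(i < n) `|a i| * 2 <= \sum_(i < n) (1 + a i ^+ 2).
      apply: ler_sum => i _.
      have := sqr_ge0 (`|a i| - 1); have := real_normK (num_real (a i)).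
      nra.
    move: hs; rewrite big_split /= sumr_const card_ord -mulr_suml => hs.
    move: hK; rewrite -/a => hK.
    lra.
  - lra.
apply: (le_trans PE).
rewrite !EFinD -addeA; apply: leeD => //; exact: leeD.
Qed.

Lemma det_bound (R : realType) (t C1 C2 bb G : R) (n : nat) :
  0 <= t -> (0 < n)%N -> G <= C1 * n%:R `^ ((1 - t) / (1 + t)) -> 0 < C2 ->
  n%:R `^ (- t / (1 + t)) <= C2 * `|bb| ->
  bb != 0 /\ G / bb ^+ 2 <= `|C1| * C2 ^+ 2 * n%:R.
Proof.
move=> t0 n0 hG C20 hb.
have x0 : 0 < n%:R :> R by rewrite ltr0n.
set x := n%:R in x0 hG hb *.
set u := x `^ ((1 - t) / (1 + t)) in hG.
pose v := x `^ (t / (1 + t)).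
have u0 : 0 <= u by exact: powR_ge0.
have v0 : 0 < v by exact: powR_gt0.
have t1 : 1 + t != 0 by rewrite gt_eqF // ltr_pwDl.
have hv : x `^ (- t / (1 + t)) = v^-1 by rewrite mulNr powRN.
have hx : u * v * v = x.
  rewrite /u /v -!powRD; last 2 first.
  - by apply/implyP => _; rewrite gt_eqF.
  - by apply/implyP => _; rewrite gt_eqF.
  rewrite (_ : _ + _ + _ = 1) ?powRr1 ?ltW //.
  by field.
rewrite hv in hb.
have h1 : 1 <= C2 * `|bb| * v.
  by rewrite -(ler_pM2r v0) mulVf ?gt_eqF // in hb.
have bb0 : bb != 0.
  apply/negP => /eqP b0; move: h1; rewrite b0 normr0 mulr0 mul0r; lra.
split => //.
have b2 : 0 < bb ^+ 2 by rewrite -real_normK ?num_real // exprn_gt0 // normr_gt0.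
rewrite ler_pdivrMr //.
have h2 : 1 <= C2 ^+ 2 * bb ^+ 2 * v ^+ 2.
  rewrite -(real_normK (num_real bb)) -!exprMn.
  exact: exprn_ege1.
have hC : G <= `|C1| * u.
  by apply: (le_trans hG); rewrite ler_wpM2r // real_ler_norm // num_real.
have h3 : `|C1| * u * 1 <= `|C1| * u * (C2 ^+ 2 * bb ^+ 2 * v ^+ 2).
  by rewrite ler_wpM2l //; apply: mulr_ge0.
rewrite -hx (_ : `|C1| * C2 ^+ 2 * (u * v * v) * bb ^+ 2 =
  `|C1| * u * (C2 ^+ 2 * bb ^+ 2 * v ^+ 2)); last by ring.
by rewrite mulr1 in h3; exact: le_trans hC h3.
Qed.

Import HBSimple.

Lemma near_ex (P : nat -> Prop) : (\forall k \near \oo, P k) -> exists k, P k.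
Proof. case=> N _ hN. by exists N; apply: hN => /=. Qed.

Lemma approx_choice (R : realType) (mu : probability R R) (e : R) :
  0 < e -> mu.-integrable setT (fun y => y%:E) ->
  exists s : R -> R, exists rs : seq R,
    [/\ measurable_fun setT s, uniq rs, (forall y, s y \in rs) &
        (\int[mu]_y (`|y - s y|)%:E <= e%:E)%E].
Proof.
move=> e0 iid.
have [g_ [_ _ l1g]] := approximation_sfun_integrable measurableT iid.
have /fine_cvgP[fin_ev cvg_fine] := l1g.
case: fin_ev => N1 _ h1.
case: (cvgr_lt _ cvg_fine e e0) => N2 _ h2.
pose N := maxn N1 N2.
have hfin := h1 N (leq_maxl N1 N2).
have hlt := h2 N (leq_maxr N1 N2).
have [rs0 hrs0] := (finite_seqP _).1 (fimfunP (g_ N)).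
exists (g_ N), (undup rs0); split.
- exact: measurable_funP.
- exact: undup_uniq.
- move=> y; rewrite mem_undup.
  have : range (g_ N) (g_ N y) by exists y.
  by rewrite hrs0.
- move: hfin hlt => /= hfin hlt.
  under eq_integral => y _ do rewrite (_ : `|y - g_ N y|%:E = `|y%:E - (g_ N y)%:E|%E) //.
  by rewrite -(fineK hfin) lee_fin; exact: ltW.
Qed.

Unset Implicit Arguments.

Theorem lemmaA4 (R : realType) (d : measure_display) (T : measurableType d)
  (P : probability T R) (t : R) (g : nat -> nat -> R) (b : nat -> R)
  (mu : probability R R) (w : nat -> nat -> T -> R) (delta : R) :
  0 <= t <= 1 ->
  (exists C : R, forall n : nat, (0 < n)%N ->
      \sum_(i < n) g n i ^+ 2 <= C * (n%:R `^ ((1 - t) / (1 + t)))) ->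
  (exists C : R, 0 < C /\ forall n : nat, (0 < n)%N ->
      n%:R `^ (- t / (1 + t)) <= C * `|b n|) ->
  (in_D1 mu \/ in_D2 mu) ->
  (forall n i, (i < n)%N -> measurable_fun setT (w n i)) ->
  (forall n i, (i < n)%N -> forall B : set R, measurable B ->
      P (w n i @^-1` B) = mu B) ->
  (forall n, mutually_independent P (fun i : 'I_n => w n i)) ->
  0 < delta ->
  (fun n : nat => P [set x | ratio_gt delta
       `|\sum_(i < n) w n i x * g n i|
       (b n * \sum_(i < n) w n i x ^+ 2)]) @ \oo --> 0%E.
Proof.
move=> ht [C1 hC1] [C2 [C20 hC2]] hD mw law indep d0.
have t0 : 0 <= t by case/andP: ht.
pose K := `|C1| * C2 ^+ 2.
have K0 : 0 <= K by rewrite /K mulr_ge0 // sqr_ge0.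
have p0 := nondeg hD.
set p := fine (mu [set y : R | 2^-1 <= `|y|]) in p0.
have [iid mean0] : mu.-integrable setT (fun y => y%:E) /\ (\int[mu]_y y%:E = 0)%E.
  by case: hD => [[h1 [h2 _]] | [h1 [h2 _]]].
pose u n := P [set x | ratio_gt delta `|\sum_(i < n) w n i x * g n i|
       (b n * \sum_(i < n) w n i x ^+ 2)].
have u0 n : (0 <= u n)%E := measure_ge0 _ _.
have key : forall tau, 0 < tau -> exists N, forall n, (N <= n)%N -> (u n <= tau%:E)%E.
  move=> tau tau0.
  set c := p / 8.
  have c0 : 0 < c by rewrite /c divr_gt0.
  have K1 : 0 < 1 + K by lra.
  pose e := tau * delta * c / (8 * (1 + K)).
  have e0 : 0 < e by rewrite /e divr_gt0 // ?mulr_gt0.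
  have [s [rs [ms urs srs he]]] := approx_choice e0 iid.
  have hm : `|msum mu s rs| <= e.
    by have := le_trans (m_bound ms urs srs iid mean0) he; rewrite lee_fin.
  set VA := Vof mu (\1_[set y : R | 2^-1 <= `|y|]) [:: 0; 1].
  set Vs := Vof mu s rs.
  pose Cst := 4 * VA / p ^+ 2 + 4 * K * Vs / (delta * c) ^+ 2.
  have Cst0 : 0 <= Cst.
    have VA0 : 0 <= VA by exact: Vof_ge0.
    have Vs0 : 0 <= Vs by exact: Vof_ge0.
    rewrite /Cst; apply: addr_ge0; apply: divr_ge0; rewrite ?sqr_ge0 //.
      by apply: mulr_ge0.
    by apply: mulr_ge0 => //; apply: mulr_ge0.
  exists (Num.trunc (4 * Cst / tau)).+1 => n hn.
  have n0 : (0 < n)%N by apply: leq_trans hn.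
  have nR : 0 < n%:R :> R by rewrite ltr0n.
  have hnC : 4 * Cst / tau < n%:R.
    apply: (lt_le_trans (truncnS_gt _)); rewrite ler_nat //.
  have [bb0 hdet] := det_bound t0 n0 (hC1 n n0) C20 (hC2 n n0).
  have hK : \sum_(i < n) (g n i / `|b n|) ^+ 2 <= K * n%:R.
    rewrite (eq_bigr (fun i : 'I_n => g n i ^+ 2 / b n ^+ 2)); last first.
      by move=> i _; rewrite expr_div_n real_normK // num_real.
    by rewrite -mulr_suml.
  have hf := fixed_n (W := fun i : 'I_n => w n i) (gv := fun i : 'I_n => g n i)
    n0 (fun i => mw n i (ltn_ord i)) (fun i => law n i (ltn_ord i)) (indep n)
    bb0 hK K0 d0 ms urs srs he hm p0.
  apply: (le_trans hf); rewrite lee_fin.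
  rewrite -/p -/c -/VA -/Vs.
  have pn0 : p != 0 by rewrite gt_eqF.
  have nn0 : n%:R != 0 :> R by rewrite gt_eqF.
  have dn0 : delta != 0 by rewrite gt_eqF.
  have cn0 : c != 0 by rewrite gt_eqF.
  have Kn0 : 1 + K != 0 by rewrite gt_eqF.
  have E1 : n%:R * VA / (p * n%:R / 2) ^+ 2 = (4 * VA / p ^+ 2) / n%:R.
    by field; rewrite ?nn0 ?pn0 ?dn0 ?cn0 ?Kn0.
  have E2 : K * n%:R * Vs / (delta * c * n%:R / 2) ^+ 2 =
      (4 * K * Vs / (delta * c) ^+ 2) / n%:R.
    by field; rewrite ?nn0 ?pn0 ?dn0 ?cn0 ?Kn0.
  have E3 : (1 + K) * n%:R / 2 * (2 * e) / (delta * c * n%:R / 2) = tau / 4.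
    by rewrite /e; field; rewrite ?nn0 ?pn0 ?dn0 ?cn0 ?Kn0.
  rewrite E1 E2 E3.
  have hC : Cst / n%:R <= tau / 4.
    rewrite ler_pdivrMr //.
    move: hnC; rewrite ltr_pdivrMr // => hnC.
    nra.
  move: hC; rewrite /Cst mulrDl => hC.
  lra.
apply/fine_cvgP; split.
  have [N hN] := key 1 ltr01.
  exists N => // n /= hn.
  by rewrite ge0_fin_numE //; exact: le_lt_trans (hN n hn) (ltry _).
apply/cvgrPdist_le => tau tau0.
have [N hN] := key tau tau0.
exists N => // n /= hn.
have hb := hN n hn.
have fin : u n \is a fin_num.
  by rewrite ge0_fin_numE //; exact: le_lt_trans hb (ltry _).
rewrite sub0r normrN ger0_norm ?fine_ge0 //.
by rewrite -lee_fin fineK.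
Qed.
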